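(* Consider a market with $n$ buyers, $m$ items and $T$ time periods, where item $j$ has per-period supply $s_j^t\ge0$ and overall supply $s_j\ge0$. Every buyer has budget $B_i=1$ and binary valuations $v_{ij}\in\{0,1\}$, and buyer $i$ has per-period demands $d_i^t\ge0$. A feasible allocation is $x=(x_{ij}^t)\ge0$ with $\sum_i x_{ij}^t\le s_j^t$ for all $j,t$ and $\sum_{t,i}x_{ij}^t\le s_j$ for all $j$; let $u_i^t(x_i^t)=\sum_j v_{ij}x_{ij}^t-d_i^t$. Assume there is a feasible allocation with $u_i^t(x_i^t)>0$ for all $i,t$. Then the set of leximin-optimal feasible allocations coincides with the set of maximum Nash welfare allocations, i.e. the optimal solutions of $$\max_{x\ge0}\sum_i\frac1T\sum_t\log\Big(\sum_j v_{ij}x_{ij}^t-d_i^t\Big)\ \text{ over feasible allocations}.$$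
   Context: Leximin order: for vectors $v,\tilde v$ of equal length with nondecreasing rearrangements $v^*,\tilde v^*$, $v$ is leximin-greater than $\tilde v$ if there is $k$ with $v^*_l=\tilde v^*_l$ for $l<k$ and $v^*_k>\tilde v^*_k$. Here a feasible allocation $x$ is leximin-optimal if no feasible $\tilde x$ has the vector $(u_i^t(\tilde x_i^t))_{i,t}$ (indexed by all buyer–period pairs) leximin-greater than $(u_i^t(x_i^t))_{i,t}$. *)

(* Defs.v *)
From HB Require Import structures.
From mathcomp Require Import all_boot all_order all_algebra.
From mathcomp Require Import reals exp.
Set Implicit Arguments. Unset Strict Implicit. Unset Printing Implicit Defensive.
Import Order.TTheory GRing.Theory Num.Theory.
Local Open Scope ring_scope.

Section Market.
Variables (R : realType) (n m T : nat).

Definition alloc := 'I_n -> 'I_m -> 'I_T -> R.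

Definition feasible (sp : 'I_m -> 'I_T -> R) (s : 'I_m -> R) (x : alloc) : Prop :=
  [/\ forall i j t, 0 <= x i j t,
      forall j t, \sum_(i < n) x i j t <= sp j t
    & forall j, \sum_(t < T) \sum_(i < n) x i j t <= s j].

Definition util (v : 'I_n -> 'I_m -> R) (d : 'I_n -> 'I_T -> R) (x : alloc)
  (i : 'I_n) (t : 'I_T) : R := \sum_(j < m) v i j * x i j t - d i t.

Definition utilvec v d (x : alloc) : seq R :=
  [seq util v d x p.1 p.2 | p : 'I_n * 'I_T].

Definition leximin_gt (a b : seq R) : Prop :=
  let a' := sort <=%R a in let b' := sort <=%R b in
  exists k : nat, (k < size a')%N /\
    (forall l, (l < k)%N -> nth 0 a' l = nth 0 b' l) /\ nth 0 b' k < nth 0 a' k.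

Definition leximin_optimal v d sp s (x : alloc) : Prop :=
  feasible sp s x /\
  ~ (exists y : alloc, feasible sp s y /\ leximin_gt (utilvec v d y) (utilvec v d x)).

(* Nash welfare objective  sum_i (1/T) sum_t log u_i^t ; log is only defined on
   positive utilities, log(u) = -oo for u <= 0 *)
Definition all_pos v d (x : alloc) : Prop := forall i t, 0 < util v d x i t.

Definition nash_welfare v d (x : alloc) : R :=
  \sum_(i < n) (T%:R)^-1 * \sum_(t < T) ln (util v d x i t).

Definition max_nash_welfare v d sp s (x : alloc) : Prop :=
  [/\ feasible sp s x, all_pos v d x &
      forall y : alloc, feasible sp s y -> all_pos v d y ->
        nash_welfare v d y <= nash_welfare v d x].

End Market.

(* Main.v *)
Require Import Defs.
From HB Require Import structures.
From mathcomp Require Import all_boot all_order all_algebra.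
From mathcomp Require Import reals exp boolp.
From mathcomp Require Import ring lra zify.
Import Order.TTheory GRing.Theory Num.Theory.
Local Open Scope ring_scope.
Set Implicit Arguments. Unset Strict Implicit. Unset Printing Implicit Defensive.
Section SeqLemmas.
Variable R : realType.
Implicit Types (s a b : seq R) (c : R).

Definition LG a b := exists c : R,
  perm_eq [seq x <- a | x < c] [seq x <- b | x < c] /\
  (count (pred1 c) a < count (pred1 c) b)%N.

Definition downP (P : pred R) := forall x y, x <= y -> P y -> P x.

Lemma sorted_filter_take (P : pred R) s :
  sorted <=%R s -> downP P -> [seq x <- s | P x] = take (count P s) s.
Proof.
move=> Hs HP; elim: s Hs => [|x s IH] //= Hs.
have Hs' := path_sorted Hs.
case Px: (P x) => /=; first by rewrite IH.
have Hall := order_path_min (@le_trans _ R) Hs.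
have H0 : {in s, P =1 pred0}.
  move=> y ys /=; apply/negbTE/negP => Py.
  by move/allP: Hall => /(_ y ys) xy; rewrite (HP _ _ xy Py) in Px.
by rewrite (eq_in_filter H0) filter_pred0 (eq_in_count H0) count_pred0.
Qed.

Lemma nth_count (P : pred R) s l :
  sorted <=%R s -> downP P -> (l < size s)%N ->
  P (nth 0 s l) = (l < count P s)%N.
Proof.
move=> Hs HP Hl.
have Hft := sorted_filter_take Hs HP.
have Hc : (count P s <= size s)%N by apply: count_size.
case: (ltnP l (count P s)) => Hlc.
  rewrite -(nth_take 0 Hlc) -Hft.
  have : nth 0 [seq x <- s | P x] l \in [seq x <- s | P x].
    by apply: mem_nth; rewrite size_filter.
  by rewrite mem_filter => /andP[].
apply/negbTE/negP => Pl.
have Hd : count P (drop (count P s) s) = 0%N.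
  have := count_cat P (take (count P s) s) (drop (count P s) s).
  rewrite cat_take_drop -Hft.
  have -> : count P [seq x <- s | P x] = count P s.
    by rewrite -size_filter filter_id size_filter.
  by move/eqP; rewrite -{1}(addn0 (count P s)) eqn_add2l => /eqP <-.
have : has P (drop (count P s) s).
  apply/hasP; exists (nth 0 s l) => //.
  rewrite -(subnKC Hlc) -nth_drop; apply: mem_nth.
  rewrite size_drop; apply: ltn_sub2r => //; exact: leq_ltn_trans Hlc Hl.
by rewrite has_count Hd.
Qed.

Lemma sort_sorted_R s : sorted <=%R (sort <=%R s).
Proof. by apply: sort_sorted; exact: le_total. Qed.

Lemma count_sort (P : pred R) s : count P (sort <=%R s) = count P s.
Proof. by apply/permP; rewrite perm_sort. Qed.

Lemma size_sort_R s : size (sort <=%R s) = size s.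
Proof. by rewrite size_sort. Qed.

Lemma LG_leximin a b : size a = size b -> LG a b -> leximin_gt a b.
Proof.
move=> Hsz [c [Hp Hcnt]].
rewrite /leximin_gt.
set a' := sort <=%R a; set b' := sort <=%R b.
have sa : sorted <=%R a' := sort_sorted_R a.
have sb : sorted <=%R b' := sort_sorted_R b.
have dlt : downP (fun x => x < c) by move=> x y xy yc; apply: le_lt_trans xy yc.
have dle : downP (fun x => x <= c) by move=> x y xy yc; apply: le_trans xy yc.
set M := count (fun x => x < c) a.
have HM : count (fun x => x < c) b = M.
  by rewrite /M -!size_filter (perm_size Hp).
set p := count (pred1 c) a; set q := count (pred1 c) b.
have cle : forall s, count (fun x => x <= c) s = addn (count (fun x => x < c) s) (count (pred1 c) s).
  move=> s; rewrite -count_predUI.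
  have -> : count (predI (fun x => x < c) (pred1 c)) s = 0%N.
    rewrite (eq_count (a2 := pred0)) ?count_pred0 // => y /=.
    by apply/negbTE; apply/negP => /andP[yc /eqP ye]; rewrite ye ltxx in yc.
  rewrite addn0; apply: eq_count => y /=.
  by rewrite le_eqVlt orbC.
have Hsa : size a' = size a by rewrite size_sort_R.
have Hsb : size b' = size b by rewrite size_sort_R.
have Hk : (M + p < size a')%N.
  rewrite Hsa Hsz; apply: (leq_trans _ (count_size (fun x => x <= c) b)).
  by rewrite cle HM ltn_add2l.
exists (M + p)%N; split => //.
have Htake : take M a' = take M b'.
  rewrite -[M in take M a'](count_sort _ a) -sorted_filter_take //.
  rewrite -[M in take M b']HM -[count _ b](count_sort _ b) -sorted_filter_take //.
  rewrite !filter_sort; [|exact: le_total|exact: le_trans|exact: le_total|exact: le_trans].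
  by apply/perm_sort_leP.
have Hmid : forall s, let s' := sort <=%R s in forall l, (l < size s')%N ->
   leq (count (fun x => x < c) s) l -> leq l.+1 (count (fun x => x <= c) s) ->
   nth 0 s' l = c.
  move=> s s' l Hl H1 H2.
  have := nth_count (sort_sorted_R s) dlt Hl; rewrite count_sort ltnNge H1 /= => H3.
  have := nth_count (sort_sorted_R s) dle Hl; rewrite count_sort H2 => H4.
  by apply/eqP; rewrite eq_le H4 leNgt H3.
split.
  move=> l Hl.
  case: (ltnP l M) => HlM.
    by rewrite -(nth_take 0 HlM) Htake nth_take.
  rewrite (Hmid a) //; last by rewrite cle.
    rewrite (Hmid b) //; first by rewrite Hsb -Hsz -Hsa; apply: ltn_trans Hk.
      by rewrite HM.
    rewrite cle HM; apply: (ltn_trans Hl); by rewrite ltn_add2l.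
  by apply: ltn_trans Hk.
rewrite (Hmid b) //; first last.
- by rewrite cle HM ltn_add2l.
- by rewrite HM leq_addr.
- by rewrite Hsb -Hsz -Hsa.
have := nth_count sa dle Hk; rewrite count_sort cle ltnn => /negbT.
by rewrite -ltNge.
Qed.

Lemma all_drop_ge s k : sorted <=%R s -> (k < size s)%N ->
  forall y, y \in drop k s -> nth 0 s k <= y.
Proof.
move=> Hs Hk y /(nthP 0) [i Hi <-].
rewrite nth_drop; apply: le_sorted_leq_nth => //; rewrite ?inE ?leq_addr //.
by rewrite size_drop ltn_subRL in Hi.
Qed.

Lemma leximin_LG a b : size a = size b -> leximin_gt a b -> LG a b.
Proof.
move=> Hsz [k [Hk [Heq Hlt]]].
set a' := sort <=%R a in Hk Heq Hlt; set b' := sort <=%R b in Heq Hlt.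
have sa : sorted <=%R a' := sort_sorted_R a.
have sb : sorted <=%R b' := sort_sorted_R b.
have Hsab : size a' = size b' by rewrite !size_sort_R.
have Hkb : (k < size b')%N by rewrite -Hsab.
set c := nth 0 b' k.
have dlt : downP (fun x => x < c) by move=> x y xy yc; apply: le_lt_trans xy yc.
exists c.
have Htk : take k a' = take k b'.
  apply: (@eq_from_nth _ 0); first by rewrite !size_take Hsab.
  move=> i; rewrite size_take Hk => Hi; rewrite !nth_take //; exact: Heq.
set Ma := count (fun x => x < c) a'; set Mb := count (fun x => x < c) b'.
have HMa : (Ma <= k)%N.
  rewrite leqNgt -(nth_count sa dlt Hk) -leNgt; exact: ltW.
have HMb : (Mb <= k)%N.
  by rewrite leqNgt -(nth_count sb dlt Hkb) ltxx.
have Hl : forall l, (l < k)%N -> (l < Ma)%N = (l < Mb)%N.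
  move=> l lk.
  rewrite -(nth_count sa dlt (ltn_trans lk Hk)) -(nth_count sb dlt (ltn_trans lk Hkb)).
  by rewrite Heq.
have HM : Ma = Mb.
  apply/eqP; rewrite eqn_leq; apply/andP; split; rewrite leqNgt; apply/negP => H.
  - by have := Hl Mb (leq_trans H HMa); rewrite H ltnn.
  - by have := Hl Ma (leq_trans H HMb); rewrite H ltnn.
split.
  apply: (perm_trans (y := [seq x <- a' | x < c])).
    by apply: perm_filter; rewrite perm_sym perm_sort.
  apply: (perm_trans (y := [seq x <- b' | x < c])); last by apply: perm_filter; rewrite perm_sort.
  rewrite !sorted_filter_take // -/Ma -/Mb HM.
  suff -> : take Mb a' = take Mb b' by [].
  apply: (@eq_from_nth _ 0); first by rewrite !size_take Hsab.
  have HMbs : (Mb < size a')%N by apply: leq_ltn_trans HMb Hk.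
  move=> i; rewrite size_take HMbs => Hi; rewrite !nth_take //.
  apply: Heq; apply: leq_trans Hi HMb.
rewrite -(count_sort _ a) -(count_sort _ b) -/a' -/b'.
rewrite -(cat_take_drop k a') -(cat_take_drop k b') !count_cat Htk ltn_add2l.
have -> : count (pred1 c) (drop k a') = 0%N.
  apply/eqP; rewrite -leqn0 leqNgt -has_count; apply/hasP => -[y yd /eqP yc].
  have := all_drop_ge sa Hk yd; rewrite yc => H.
  by have := lt_le_trans Hlt H; rewrite ltxx.
rewrite (drop_nth 0 Hkb) /= eqxx //.
Qed.

End SeqLemmas.
Section Abel.
Variables (R : realType) (I : finType) (u De : I -> R).

Lemma abel_aux N : forall (S : {set I}) (h : I -> R), (#|S| <= N)%N ->
  (forall A : {set I}, A \subset S ->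
     (forall a b, a \in A -> b \in S -> b \notin A -> u a < u b) ->
     \sum_(p in A) De p <= 0) ->
  (forall p, p \in S -> 0 <= h p) ->
  (forall p q, u p <= u q -> h q <= h p) ->
  \sum_(p in S) h p * De p <= 0.
Proof.
elim: N => [|N IH] S h HS HA Hh Hm.
  move: HS; rewrite leqn0 cards_eq0 => /eqP ->; by rewrite big_set0.
case: (set_0Vmem S) => [->|[q0 q0S]]; first by rewrite big_set0.
case: (@arg_maxP _ _ I q0 (mem S) u q0S) => q qS Hq.
rewrite (eq_bigr (fun p => h q * De p + (h p - h q) * De p)); last by move=> p _; ring.
rewrite big_split /= -mulr_sumr.
have H1 : h q * \sum_(p in S) De p <= 0.
  rewrite mulr_ge0_le0 //; first exact: Hh.
  by apply: HA => // a b _ -> /negP.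
have H2 : \sum_(p in S) (h p - h q) * De p <= 0.
  rewrite (bigID (fun p => u p < u q)) /=.
  rewrite [X in _ + X]big1 ?addr0; last first.
    move=> p /andP[pS]; rewrite -leNgt => Hpq.
    have Hpq' : u p <= u q by exact: Hq.
    have -> : h p = h q.
      by apply/eqP; rewrite eq_le (Hm _ _ Hpq') (Hm _ _ Hpq).
    by rewrite subrr mul0r.
  set S' := [set p in S | u p < u q].
  rewrite (eq_bigl (fun p => p \in S')); last by move=> p; rewrite inE.
  apply: (IH S' (fun p => h p - h q)).
  - have : (#|S'| < #|S|)%N.
      apply: proper_card; apply/properP; split.
        by apply/subsetP => p; rewrite inE => /andP[].
      by exists q => //; rewrite inE ltxx andbF.
    move=> H; rewrite -ltnS; exact: leq_trans H HS.
  - move=> A AS' Hlow; apply: HA.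
      apply: subset_trans AS' _; by apply/subsetP => p; rewrite inE => /andP[].
    move=> a b aA bS bA.
    case: (boolP (b \in S')) => bS'; first exact: Hlow.
    have : a \in S' by apply: (subsetP AS').
    rewrite !inE bS /= -leNgt in bS' * => /andP[_ aq].
    exact: lt_le_trans aq bS'.
  - move=> p; rewrite inE => /andP[pS pq]; rewrite subr_ge0; apply: Hm.
    exact: Hq.
  - move=> p p' Hpp'; have := Hm _ _ Hpp'; lra.
lra.
Qed.

Lemma abel (h : I -> R) :
  (forall A : {set I}, (forall a b, a \in A -> b \notin A -> u a < u b) ->
     \sum_(p in A) De p <= 0) ->
  (forall p, 0 <= h p) ->
  (forall p q, u p <= u q -> h q <= h p) ->
  \sum_p h p * De p <= 0.
Proof.
move=> HA Hh Hm.
rewrite (eq_bigl (fun p => p \in [set: I])); last by move=> p; rewrite inE.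
apply: (abel_aux (N := #|[set: I]|)) => // A _ Hlow.
by apply: HA => a b aA bA; apply: Hlow.
Qed.

End Abel.
Section Market.
Variables (R : realType) (n m T : nat).
Variables (v : 'I_n -> 'I_m -> R) (d : 'I_n -> 'I_T -> R).
Variables (sp : 'I_m -> 'I_T -> R) (s : 'I_m -> R).
Hypothesis hv : forall i j, v i j = 0 \/ v i j = 1.

Local Notation I := ('I_n * 'I_T)%type.
Local Notation X := (alloc R n m T).

Definition U (x : X) (p : I) := util v d x p.1 p.2.
Definition period (x : X) j t := \sum_(i < n) x i j t.
Definition total (x : X) j := \sum_(t < T) \sum_(i < n) x i j t.

Definition rfeas (x : X) (E1 : 'I_m -> 'I_T -> R) (E2 : 'I_m -> R) :=
  [/\ forall i j t, 0 <= x i j t,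
      forall j t, period x j t <= sp j t + E1 j t
    & forall j, total x j <= s j + E2 j].

Lemma feasE x : feasible sp s x <-> rfeas x (fun _ _ => 0) (fun _ => 0).
Proof.
split=> -[H1 H2 H3]; split => // j; rewrite ?addr0; try move=> t; rewrite ?addr0;
  first [exact: H2 | exact: H3 | by have := H2 j t; rewrite addr0 | by have := H3 j; rewrite addr0].
Qed.

Definition conv (x y : X) (l : R) : X := fun i j t => x i j t + l * (y i j t - x i j t).

Lemma sum_conv (J : finType) (a b : J -> R) l :
  \sum_(k : J) (a k + l * (b k - a k)) = \sum_k a k + l * (\sum_k b k - \sum_k a k).
Proof. by rewrite big_split /= -sumrB mulr_sumr. Qed.

Lemma sum_conv_ord k (a b : 'I_k -> R) l :
  \sum_(i < k) (a i + l * (b i - a i)) = \sum_(i < k) a i + l * (\sum_(i < k) b i - \sum_(i < k) a i).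
Proof. by rewrite big_split /= -sumrB mulr_sumr. Qed.

Lemma U_conv x y l p : U (conv x y l) p = U x p + l * (U y p - U x p).
Proof.
rewrite /U /util /conv.
have -> : \sum_(j < m) v p.1 j * (x p.1 j p.2 + l * (y p.1 j p.2 - x p.1 j p.2)) =
  \sum_(j < m) (v p.1 j * x p.1 j p.2 + l * (v p.1 j * y p.1 j p.2 - v p.1 j * x p.1 j p.2)).
  by apply: eq_bigr => j _; ring.
rewrite sum_conv_ord; ring.
Qed.

Lemma period_conv x y l j t : period (conv x y l) j t = period x j t + l * (period y j t - period x j t).
Proof. by rewrite /period /conv sum_conv_ord. Qed.

Lemma total_conv x y l j : total (conv x y l) j = total x j + l * (total y j - total x j).
Proof.
rewrite /total -sum_conv_ord; apply: eq_bigr => t _.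
by rewrite -sum_conv_ord.
Qed.

Lemma conv_bound (P P' S e l : R) : P <= S -> P' <= S + e -> 0 <= l -> l <= 1 ->
  P + l * (P' - P) <= S + l * e.
Proof.
move=> h1 h2 h3 h4.
have : 0 <= (1 - l) * (S - P) by apply: mulr_ge0; lra.
have : 0 <= l * (S + e - P') by apply: mulr_ge0; lra.
nra.
Qed.

Lemma rfeas_conv x y E1 E2 l : feasible sp s x -> rfeas y E1 E2 -> 0 <= l -> l <= 1 ->
  rfeas (conv x y l) (fun j t => l * E1 j t) (fun j => l * E2 j).
Proof.
move=> /feasE [x0 xp xt] [y0 yp yt] l0 l1; split.
- move=> i j t; rewrite /conv.
  have := x0 i j t; have := y0 i j t => h1 h2.
  have : 0 <= l * y i j t by apply: mulr_ge0.
  have : 0 <= (1 - l) * x i j t by apply: mulr_ge0; lra.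
  nra.
- move=> j t; rewrite period_conv; apply: conv_bound => //.
  by have := xp j t; rewrite addr0.
- move=> j; rewrite total_conv; apply: conv_bound => //.
  by have := xt j; rewrite addr0.
Qed.

Definition upd (x : X) i0 j0 t0 (de : R) : X :=
  fun i j t => x i j t + (if (i == i0) && (j == j0) && (t == t0) then de else 0).

Lemma sum_pick (J : finType) (j0 : J) (F : J -> R) (b : bool) :
  \sum_(j : J) (if b && (j == j0) then F j else 0) = if b then F j0 else 0.
Proof.
case: b => /=; last by rewrite big1.
by rewrite (bigD1 j0) //= eqxx big1 ?addr0 // => j /negbTE ->.
Qed.

Lemma U_upd x i0 j0 t0 de p :
  U (upd x i0 j0 t0 de) p = U x p + (if p == (i0, t0) then v i0 j0 * de else 0).
Proof.
rewrite /U /util /upd.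
have -> : \sum_(j < m) v p.1 j * (x p.1 j p.2 + (if (p.1 == i0) && (j == j0) && (p.2 == t0) then de else 0)) =
  \sum_(j < m) v p.1 j * x p.1 j p.2 + \sum_(j < m) (if ((p.1 == i0) && (p.2 == t0)) && (j == j0) then v p.1 j * de else 0).
  rewrite -big_split; apply: eq_bigr => j _ /=.
  by case: (p.1 == i0); case: (j == j0); case: (p.2 == t0) => /=; rewrite ?mulr0 ?addr0 ?mulrDr.
rewrite sum_pick; case: p => i t /=; rewrite xpair_eqE.
by case: (boolP ((i == i0) && (t == t0))) => [/andP[/eqP -> /eqP ->]|_]; rewrite /=; ring.
Qed.

Lemma period_upd x i0 j0 t0 de j t :
  period (upd x i0 j0 t0 de) j t = period x j t + (if (j == j0) && (t == t0) then de else 0).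
Proof.
rewrite /period /upd big_split /=; congr (_ + _).
rewrite (eq_bigr (fun i => if ((j == j0) && (t == t0)) && (i == i0) then de else 0)) ?sum_pick //.
by move=> i _; case: (i == i0); case: (j == j0); case: (t == t0).
Qed.

Lemma total_upd x i0 j0 t0 de j :
  total (upd x i0 j0 t0 de) j = total x j + (if j == j0 then de else 0).
Proof.
rewrite /total (eq_bigr (fun t => period x j t + (if (j == j0) && (t == t0) then de else 0))).
  by rewrite big_split /= sum_pick.
by move=> t _; rewrite -(period_upd x i0).
Qed.

Lemma small_lambda (D K : R) : 0 < D -> 0 <= K ->
  exists l : R, [/\ 0 < l, l <= 1, l * (D + K) <= D & l * K < D].
Proof.
move=> D0 K0; exists (D / (D + K)).
have DK : 0 < D + K by lra.
split.
- by apply: divr_gt0.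
- by rewrite ler_pdivrMr // mul1r; lra.
- by rewrite divfK ?gt_eqF.
- rewrite mulrAC ltr_pdivrMr //; nra.
Qed.


Definition V1 (x : X) := exists (x' : X) (a : I) (de : R),
  [/\ feasible sp s x', 0 < de & forall p, U x' p = U x p + (if p == a then de else 0)].
Definition V2 (x : X) := exists (x' : X) (a b : I) (e : R),
  [/\ feasible sp s x', 0 < e, U x a < U x b &
   forall p, U x' p = U x p + (if p == a then e else if p == b then - e else 0)].
Definition lowerc (x : X) (A : {set I}) := forall a b, a \in A -> b \notin A -> U x a < U x b.
Definition LS (x : X) := forall A, lowerc x A -> forall y, feasible sp s y ->
  \sum_(p in A) (U y p - U x p) <= 0.

Section Cut.
Variables (x : X) (A : {set I}).
Hypotheses (xf : feasible sp s x) (hA : lowerc x A) (nV1 : ~ V1 x) (nV2 : ~ V2 x).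

Definition gain (x' : X) a e := forall p, U x' p = U x p + (if p == a then e else 0).
Definition ZPI j0 t0 := exists a e x', [/\ a \in A, 0 < e, gain x' a e &
  rfeas x' (fun j t => if (j == j0) && (t == t0) then e else 0) (fun j => if j == j0 then e else 0)].
Definition ZI j0 := exists a e x', [/\ a \in A, 0 < e, gain x' a e &
  rfeas x' (fun _ _ => 0) (fun j => if j == j0 then e else 0)].

Lemma xfeas : rfeas x (fun _ _ => 0) (fun _ => 0).
Proof. by apply/feasE. Qed.

Lemma gain_conv x' a e l : gain x' a e -> gain (conv x x' l) a (l * e).
Proof. by move=> g p; rewrite U_conv g; case: (p == a); rewrite ?mulr0; ring. Qed.

Lemma F1 i j t : (i, t) \in A -> v i j = 1 -> ZPI j t.
Proof.
move=> iA Hv; have [x0 xp xt] := xfeas.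
exists (i, t), 1, (upd x i j t 1); split => //.
- by move=> p; rewrite U_upd Hv mulr1.
- split.
  + move=> i' j' t'; rewrite /upd; have := x0 i' j' t'; case: ifP => _; lra.
  + move=> j' t'; rewrite period_upd; have := xp j' t'; rewrite addr0; case: ifP => _; lra.
  + move=> j'; rewrite total_upd; have := xt j'; rewrite addr0; case: ifP => _; lra.
Qed.

Lemma F2 i j t : ZPI j t -> 0 < x i j t -> v i j = 1 /\ (i, t) \in A.
Proof.
move=> [a [e [x' [aA e0 g [x'0 x'p x't]]]]] Hx.
have [x0 _ _] := xfeas.
have [l [l0 l1 lD lK]] := small_lambda Hx (ltW e0).
have [zc0 zcp zct] := rfeas_conv xf (And3 x'0 x'p x't) (ltW l0) l1.
set z := upd (conv x x' l) i j t (- (l * e)).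
have zf : feasible sp s z.
  apply/feasE; split.
  - move=> i' j' t'; rewrite /z /upd; case: ifP => [/andP[/andP[/eqP-> /eqP->] /eqP->]|_];
      last by rewrite addr0 zc0.
    rewrite /conv; have := x'0 i j t; have := x0 i j t => h1 h2; last first.
    have : 0 <= l * x' i j t by apply: mulr_ge0; lra.
    nra.
  - move=> j' t'; rewrite period_upd; move: (zcp j' t').
    by case: ((j' == j) && (t' == t)) => /=; rewrite ?mulr0; lra.
  - move=> j'; rewrite total_upd; move: (zct j').
    by case: (j' == j) => /=; rewrite ?mulr0; lra.
have gz : forall p, U z p = U x p + (if p == a then l * e else 0)
    - (if p == (i, t) then v i j * (l * e) else 0).
  move=> p; rewrite /z U_upd (gain_conv l g p).
  by case: (p == (i, t)); rewrite ?subr0 ?addr0 // mulrN.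
have le0 : 0 < l * e by apply: mulr_gt0.
case: (hv i j) => Hv.
  exfalso; apply: nV1; exists z, a, (l * e); split => // p.
  by rewrite gz Hv mul0r; case: (p == (i, t)); rewrite ?subr0.
split => //.
case: (boolP ((i, t) \in A)) => // HnA.
exfalso; apply: nV2; exists z, a, (i, t), (l * e); split => //.
  exact: hA.
move=> p; rewrite gz Hv mul1r.
case: (eqVneq p a) => [->|pa].
  have -> : (a == (i, t)) = false.
    by apply/negbTE; apply/eqP => E; rewrite -E aA in HnA.
  by rewrite subr0.
by case: (p == (i, t)); rewrite ?subr0 ?add0r //; ring.
Qed.

Lemma F3 j t : ZPI j t -> period x j t < sp j t -> ZI j.
Proof.
move=> [a [e [x' [aA e0 g [x'0 x'p x't]]]]] Hlt.
have D0 : 0 < sp j t - period x j t by rewrite subr_gt0.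
have [l [l0 l1 lD lK]] := small_lambda D0 (ltW e0).
have [zc0 zcp zct] := rfeas_conv xf (And3 x'0 x'p x't) (ltW l0) l1.
exists a, (l * e), (conv x x' l); split => //.
- by apply: mulr_gt0.
- exact: gain_conv.
split => //.
- move=> j' t'; case: (boolP ((j' == j) && (t' == t))) => [/andP[/eqP-> /eqP->]|H].
    rewrite period_conv; have := x'p j t; rewrite !eqxx /= => h.
    have : 0 <= l * (sp j t + e - period x' j t) by apply: mulr_ge0; lra.
    nra.
  by have := zcp j' t'; rewrite (negbTE H) mulr0.
- by move=> j'; have := zct j'; case: (j' == j); rewrite ?mulr0.
Qed.

Lemma F4 j : ZI j -> total x j < s j -> False.
Proof.
move=> [a [e [x' [aA e0 g [x'0 x'p x't]]]]] Hlt.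
have D0 : 0 < s j - total x j by rewrite subr_gt0.
have [l [l0 l1 lD lK]] := small_lambda D0 (ltW e0).
have [zc0 zcp zct] := rfeas_conv xf (And3 x'0 x'p x't) (ltW l0) l1.
apply: nV1; exists (conv x x' l), a, (l * e); split.
- apply/feasE; split => //.
  + by move=> j' t'; have := zcp j' t'; rewrite mulr0.
  + move=> j'; case: (eqVneq j' j) => [->|H].
      rewrite total_conv; have := x't j; rewrite !eqxx /= => h.
      have : 0 <= l * (s j + e - total x' j) by apply: mulr_ge0; lra.
      rewrite addr0; nra.
    by have := zct j'; rewrite (negbTE H) mulr0.
- by apply: mulr_gt0.
- exact: gain_conv.
Qed.

Lemma F5 j t : ZI j -> ZPI j t.
Proof.
move=> [a [e [x' [aA e0 g [x'0 x'p x't]]]]].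
exists a, e, x'; split => //; split => //.
by move=> j' t'; have := x'p j' t'; case: ifP => _; lra.
Qed.

Notation zjt j t := `[< ZPI j t >].
Notation zj j := `[< ZI j >].

Definition W (z : X) := \sum_(p in A) \sum_(j < m) v p.1 j * z p.1 j p.2.
Definition Q (z : X) := \sum_(p : I) \sum_(j < m) (if zjt j p.2 then z p.1 j p.2 else 0).

Lemma W_le_Q z : feasible sp s z -> W z <= Q z.
Proof.
move=> /feasE [z0 _ _]; rewrite /W /Q big_mkcond /=; apply: ler_sum => -[i t] _ /=.
case: ifP => pA; last by apply: sumr_ge0 => j _; case: ifP.
apply: ler_sum => j _.
case: (hv i j) => Hv; rewrite Hv ?mul0r; first by case: ifP.
have : zjt j t by apply/asboolP; apply: (@F1 i j t).
by move=> ->; rewrite mul1r.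
Qed.

Lemma W_eq_Q : W x = Q x.
Proof.
have [x0 _ _] := xfeas.
rewrite /W /Q big_mkcond /=; apply: eq_bigr => -[i t] _ /=.
case: (boolP ((i, t) \in A)) => pA.
  apply: eq_bigr => j _.
  case: (ltrgtP (x i j t) 0) => Hx.
  - by have := x0 i j t; rewrite leNgt Hx.
  - case: ifP => Hz.
      have [Hv _] := F2 (asboolW Hz) Hx; rewrite Hv mul1r //.
    case: (hv i j) => Hv; rewrite Hv ?mul0r //.
    have : zjt j t by apply/asboolP; apply: (@F1 i j t).
    by rewrite Hz.
  - by rewrite Hx mulr0; case: ifP.
rewrite big1 // => j _; case: ifP => Hz //.
case: (ltrgtP (x i j t) 0) => Hx.
- by have := x0 i j t; rewrite leNgt Hx.
- have [_ HA] := F2 (asboolW Hz) Hx.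
  by rewrite HA in pA.
- by rewrite Hx.
Qed.

Lemma Q_eq z : Q z = \sum_(j < m) \sum_(t < T) (if zjt j t then period z j t else 0).
Proof.
rewrite /Q -(pair_bigA _ (fun i t => \sum_(j < m) (if zjt j t then z i j t else 0))) /=.
rewrite (eq_bigr (fun i => \sum_(j < m) \sum_(t < T) (if zjt j t then z i j t else 0)));
  last by move=> i _; rewrite exchange_big.
rewrite exchange_big; apply: eq_bigr => j _.
rewrite exchange_big; apply: eq_bigr => t _.
rewrite /period; case: ifP => _ //; by rewrite big1.
Qed.

Definition capj j := if zj j then s j else \sum_(t < T) (if zjt j t then sp j t else 0).

Lemma cap_le z j : feasible sp s z ->
  \sum_(t < T) (if zjt j t then period z j t else 0) <= capj j.
Proof.
move=> [z0 zp zt]; rewrite /capj; case: ifP => Hj.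
  apply: le_trans (zt j); apply: ler_sum => t _; case: ifP => _ //.
  by apply: sumr_ge0 => i _.
apply: ler_sum => t _; case: ifP => _ //; exact: zp.
Qed.

Lemma cap_eq j : \sum_(t < T) (if zjt j t then period x j t else 0) = capj j.
Proof.
have [x0 xp xt] := xf.
rewrite /capj; case: ifP => Hj.
  have ZIj := asboolW Hj.
  rewrite (eq_bigr (fun t => \sum_(i < n) x i j t)); last first.
    by move=> t _; have -> : zjt j t by apply/asboolP; apply: F5.
  apply/eqP; rewrite eq_le xt /=; rewrite leNgt; apply/negP => H.
  exact: (F4 ZIj H).
apply: eq_bigr => t _; case: ifP => Ht //.
apply/eqP; rewrite eq_le xp /= leNgt; apply/negP => H.
have := F3 (asboolW Ht) H => HI.
have : zj j by apply/asboolP.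
by rewrite Hj.
Qed.

Lemma LS_cut y : feasible sp s y -> \sum_(p in A) (U y p - U x p) <= 0.
Proof.
move=> yf.
have -> : \sum_(p in A) (U y p - U x p) = W y - W x.
  rewrite /W -sumrB; apply: eq_bigr => p _; rewrite /U /util.
  by rewrite opprB addrA subrK.
rewrite subr_le0; apply: le_trans (W_le_Q yf) _.
rewrite W_eq_Q !Q_eq; apply: ler_sum => j _.
by rewrite cap_eq; apply: cap_le.
Qed.

End Cut.

Lemma NE_LS x : feasible sp s x -> ~ V1 x -> ~ V2 x -> LS x.
Proof. by move=> xf n1 n2 A hA y yf; apply: (LS_cut xf hA n1 n2). Qed.
Lemma conv_feas x y l : feasible sp s x -> feasible sp s y -> 0 <= l -> l <= 1 ->
  feasible sp s (conv x y l).
Proof.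
move=> xf /feasE yf l0 l1; have [c0 cp ct] := rfeas_conv xf yf l0 l1.
apply/feasE; split => //.
- by move=> j t; have := cp j t; rewrite mulr0.
- by move=> j; have := ct j; rewrite mulr0.
Qed.

Lemma nw_pairs z : nash_welfare v d z = T%:R^-1 * \sum_(p : I) ln (U z p).
Proof. by rewrite /nash_welfare -mulr_sumr pair_bigA. Qed.

Lemma sum_lt (F G : I -> R) a : (forall p, F p <= G p) -> F a < G a ->
  \sum_p F p < \sum_p G p.
Proof.
move=> Hle Hlt; rewrite (bigD1 a) // [X in _ < X](bigD1 a) //=.
by apply: ltr_leD => //; apply: ler_sum => p _.
Qed.

Lemma LS_MNW x : feasible sp s x -> all_pos v d x -> LS x -> max_nash_welfare v d sp s x.
Proof.
move=> xf xp HLS; split => // y yf yp.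
have fp : forall p, 0 < U x p by move=> p; apply: xp.
have gp : forall p, 0 < U y p by move=> p; apply: yp.
rewrite !nw_pairs; apply: ler_wpM2l; first by rewrite invr_ge0 ler0n.
rewrite -subr_le0 -sumrB.
apply: (le_trans (y := \sum_p (U x p)^-1 * (U y p - U x p))).
  apply: ler_sum => p _.
  rewrite -ln_div ?posrE //.
  have -> : U y p / U x p = 1 + (U x p)^-1 * (U y p - U x p).
    by field; apply/lt0r_neq0.
  apply: le_ln1Dx.
  have : 0 < U y p / U x p by apply: divr_gt0.
  have -> : U y p / U x p = 1 + (U x p)^-1 * (U y p - U x p).
    by field; apply/lt0r_neq0.
  lra.
apply: (abel (u := U x)).
- move=> A hA; exact: HLS.
- by move=> p; rewrite invr_ge0 ltW.
- move=> p q Hpq; rewrite lef_pV2 ?posrE //.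
Qed.

Lemma MNW_nV1 x : max_nash_welfare v d sp s x -> ~ V1 x.
Proof.
move=> [xf xp xm] [x' [a [de [x'f de0 g]]]].
have fp : forall p, 0 < U x p by move=> p; apply: xp.
have x'p : all_pos v d x'.
  move=> i t; have := g (i, t); rewrite /U /= => ->.
  by have := fp (i, t); case: ifP => _; rewrite /U /=; lra.
have := xm x' x'f x'p; rewrite !nw_pairs.
have T0 : (0 < T)%N by apply: leq_ltn_trans (leq0n _) (ltn_ord a.2).
rewrite ler_pM2l ?invr_gt0 ?ltr0n // => H.
suff : \sum_p ln (U x p) < \sum_p ln (U x' p) by rewrite ltNge H.
have x'q : forall p, 0 < U x' p by move=> p; apply: x'p.
apply: (sum_lt (a := a)).
  move=> p; rewrite ler_ln ?posrE ?fp ?x'q // g.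
  by case: ifP => _; lra.
rewrite ltr_ln ?posrE ?fp ?x'q // g.
by rewrite eqxx; lra.
Qed.

Lemma MNW_nV2 x : max_nash_welfare v d sp s x -> ~ V2 x.
Proof.
move=> [xf xp xm] [x' [a [b [e [x'f e0 ab g]]]]].
have fp : forall p, 0 < U x p by move=> p; apply: xp.
have D0 : 0 < U x b - U x a by rewrite subr_gt0.
have [l [l0 l1 lD lK]] := small_lambda D0 (ltW e0).
have ba : b != a by apply/eqP => E; rewrite E ltxx in ab.
set z := conv x x' l.
have zf : feasible sp s z by apply: conv_feas => //; lra.
have gz : forall p, U z p = U x p + (if p == a then l * e else if p == b then - (l * e) else 0).
  move=> p; rewrite U_conv g; case: (p == a); case: (p == b); ring.
have le0 : 0 < l * e by apply: mulr_gt0.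
have zp : forall p, 0 < U z p.
  move=> p; rewrite gz; case: (eqVneq p a) => [->|pa]; first by have := fp a; lra.
  case: (eqVneq p b) => [->|pb]; first by have := fp a; lra.
  by rewrite addr0.
have zap : all_pos v d z by move=> i t; exact: (zp (i, t)).
have := xm z zf zap; rewrite !nw_pairs.
have T0 : (0 < T)%N by apply: leq_ltn_trans (leq0n _) (ltn_ord a.2).
rewrite ler_pM2l ?invr_gt0 ?ltr0n // => H.
suff : 0 < \sum_p (ln (U z p) - ln (U x p)).
  by rewrite sumrB subr_gt0 ltNge H.
rewrite (bigD1 a) //= (bigD1 b) //= big1 ?addr0; last first.
  move=> p /andP[pb pa]; rewrite gz (negbTE pa) (negbTE pb) addr0; ring.
rewrite !gz eqxx (negbTE ba) eqxx.
have fa := fp a; have fb := fp b.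
have key : ln (U x a) + ln (U x b) < ln (U x a + l * e) + ln (U x b - l * e).
  rewrite -!lnM ?posrE; try lra.
  have : 0 < l * e * (U x b - U x a - l * e) by apply: mulr_gt0; lra.
  move=> h; rewrite ltr_ln ?posrE; nra.
lra.
Qed.

Lemma uv_util z : utilvec v d z = [seq U z p | p : I].
Proof. by []. Qed.

Lemma count_lt (T0 : eqType) (P Q : pred T0) (e : seq T0) a :
  (forall y, P y -> Q y) -> a \in e -> Q a -> ~~ P a -> (count P e < count Q e)%N.
Proof.
move=> PQ; elim: e => [|y e IH] //= ae Qa Pa.
rewrite inE in ae; case: (eqVneq a y) ae => [<-|ay] /= ae.
  rewrite Qa (negbTE Pa) /= add0n add1n ltnS; exact: sub_count.
have := IH ae Qa Pa; case Py: (P y); first by rewrite (PQ _ Py) /= ltn_add2l.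
by move=> H; rewrite add0n; apply: leq_trans H _; apply: leq_addl.
Qed.

Lemma L3 (f g : I -> R) c :
  (forall p, (f p < c) || (g p < c) -> f p = g p) ->
  (forall p, g p = c -> f p = c) ->
  (exists a, f a = c /\ g a != c) ->
  LG [seq g p | p : I] [seq f p | p : I].
Proof.
move=> H1 H2 [a [fa ga]]; exists c; split.
  rewrite /image_mem !filter_map (@eq_filter _ (preim g (fun x => x < c)) (preim f (fun x => x < c))); last first.
    move=> p /=; change ((g p < c) = (f p < c)).
    case: (boolP ((f p < c) || (g p < c))) => Hfg; first by rewrite (H1 p Hfg).
    move: Hfg; rewrite negb_or => /andP[/negbTE -> /negbTE ->] //.
  have E : forall L, all (fun p => f p < c) L -> map g L = map f L.
    move=> L /allP HL; apply/eq_in_map => p /HL Hp.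
    by rewrite (H1 p) // Hp.
  rewrite E //; apply: (@sub_all _ (preim f (fun x => x < c))) => //.
  apply/allP => p /mapP [q]; rewrite mem_filter => /andP[Hq _] -> //.
rewrite /image_mem !count_map; apply: (count_lt (a := a)).
- by move=> p /= /eqP /H2 ->.
- by rewrite -enumT mem_enum.
- by rewrite /= fa.
- by rewrite /=.
Qed.

Section Lex.
Hypothesis hpos : exists x : X, feasible sp s x /\ all_pos v d x.

Lemma lex_allpos x : leximin_optimal v d sp s x -> all_pos v d x.
Proof.
move=> [xf Hno]; case: hpos => z [zf zp] i t.
rewrite ltNge; apply/negP => Hle.
case: (@arg_minP _ _ I (i, t) predT (U x) isT) => a _ Ha.
have ca : U x a <= 0 by apply: le_trans (Ha (i, t) isT) Hle.
apply: Hno; exists z; split => //; rewrite !uv_util.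
apply: LG_leximin; first by rewrite !size_map.
have zq : forall p, 0 < U z p by move=> p; apply: zp.
apply: (L3 (c := U x a)).
- move=> p /orP[H|H]; exfalso.
    by have := Ha p isT; rewrite leNgt H.
  by have := zq p; lra.
- by move=> p E; have := zq p; lra.
- by exists a; split => //; apply/eqP => E; have := zq a; lra.
Qed.

Lemma lex_nV1 x : leximin_optimal v d sp s x -> ~ V1 x.
Proof.
move=> [xf Hno] [x' [a [de [x'f de0 g]]]].
apply: Hno; exists x'; split => //; rewrite !uv_util.
apply: LG_leximin; first by rewrite !size_map.
apply: (L3 (c := U x a)).
- move=> p; rewrite g; case: (eqVneq p a) => [->|pa]; last by rewrite addr0.
  by rewrite ltxx /=; lra.
- by move=> p; rewrite g; case: (eqVneq p a) => [->|pa]; rewrite ?addr0 //; lra.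
- by exists a; split => //; rewrite g eqxx; apply/eqP; lra.
Qed.

Lemma lex_nV2 x : leximin_optimal v d sp s x -> ~ V2 x.
Proof.
move=> [xf Hno] [x' [a [b [e [x'f e0 ab g]]]]].
have D0 : 0 < U x b - U x a by rewrite subr_gt0.
have [l [l0 l1 lD lK]] := small_lambda D0 (ltW e0).
have ba : b != a by apply/eqP => E; rewrite E ltxx in ab.
set z := conv x x' l.
have zf : feasible sp s z by apply: conv_feas => //; lra.
have gz : forall p, U z p = U x p + (if p == a then l * e else if p == b then - (l * e) else 0).
  move=> p; rewrite U_conv g; case: (p == a); case: (p == b); ring.
have le0 : 0 < l * e by apply: mulr_gt0.
apply: Hno; exists z; split => //; rewrite !uv_util.
apply: LG_leximin; first by rewrite !size_map.
apply: (L3 (c := U x a)).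
- move=> p; rewrite gz; case: (eqVneq p a) => [->|pa]; first by rewrite ltxx /=; lra.
  case: (eqVneq p b) => [->|pb]; last by rewrite addr0.
  by rewrite ltNge (ltW ab) /=; lra.
- move=> p; rewrite gz; case: (eqVneq p a) => [->|pa]; first lra.
  by case: (eqVneq p b) => [->|pb]; rewrite ?addr0 //; lra.
- by exists a; split => //; rewrite gz eqxx; apply/eqP; lra.
Qed.

End Lex.
Lemma uv_map (h : I -> R) : [seq h p | p : I] = map h (enum (predT : pred I)).
Proof. by []. Qed.

Lemma sum_uv (h : I -> R) (F : R -> R) :
  \sum_(r <- [seq h p | p : I]) F r = \sum_p F (h p).
Proof. by rewrite uv_map big_map big_enum. Qed.

Lemma sum_mn c (a : seq R) :
  \sum_(r <- a) (if r < c then r else c) =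
  \sum_(r <- [seq r <- a | r < c]) r + c *+ (size a - size [seq r <- a | r < c]).
Proof.
elim: a => [|r a IH]; first by rewrite !big_nil subnn mulr0n addr0.
have Hs : leq (size [seq r <- a | r < c]) (size a) by rewrite size_filter count_size.
rewrite big_cons /= IH; case: ifP => Hr.
  by rewrite big_cons /= subSS addrA.
rewrite subSn // mulrS; ring.
Qed.

Lemma size_map_eq (f g : I -> R) : size [seq g p | p : I] = size [seq f p | p : I].
Proof. by rewrite !size_map. Qed.

Lemma LS_lex x : feasible sp s x -> LS x -> leximin_optimal v d sp s x.
Proof.
move=> xf HLS; split => // -[y [yf Hg]].
rewrite !uv_util in Hg.
have [c [Hp Hc]] := leximin_LG (size_map_eq _ _) Hg.
pose A := [set p | U x p <= c].
have hA : lowerc x A.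
  move=> a b; rewrite !inE => Ha Hb; rewrite -ltNge in Hb; exact: le_lt_trans Ha Hb.
have HL := HLS A hA y yf.
pose mn r := if r < c then r else c.
have K1 : \sum_p mn (U y p) = \sum_p mn (U x p).
  rewrite -(sum_uv (U y) mn) -(sum_uv (U x) mn) /mn !sum_mn (perm_big _ Hp) (perm_size Hp).
  by rewrite !size_map.
have K2 : \sum_p mn (U x p) = \sum_(p in A) U x p + \sum_(p | p \notin A) c.
  rewrite (bigID (mem A)) /=; congr (_ + _); apply: eq_bigr => p.
    rewrite /= inE => H; rewrite /mn.
    case: ifP => // /negbT; rewrite -leNgt => H'; apply/eqP; by rewrite eq_le H H'.
  move=> Hq; have H : c < U x p by move: Hq; rewrite /= inE -ltNge.
  by rewrite /mn (lt_gtF H).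
have K3 : \sum_p mn (U y p) <= \sum_(p in A) mn (U y p) + \sum_(p | p \notin A) c.
  rewrite (bigID (mem A)) /= lerD2l; apply: ler_sum => p _; rewrite /mn.
  by case: ifP => [/ltW|].
have Hex : exists2 p, p \in A & c < U y p.
  case: (pselect (exists2 p, p \in A & c < U y p)) => // Hn.
  have Hsub : forall p, U x p <= c -> U y p <= c.
    move=> p Hp'; rewrite leNgt; apply/negP => H; apply: Hn; exists p => //.
    by rewrite inE.
  exfalso.
  have C1 : leq (count (fun p => U x p <= c) (enum (predT : pred I))) (count (fun p => U y p <= c) (enum (predT : pred I))).
    by apply: sub_count => p /= /Hsub.
  have Cs : forall h : I -> R, count (fun p => h p <= c) (enum (predT : pred I)) =
      addn (count (fun p => h p < c) (enum (predT : pred I))) (count (fun p => h p == c) (enum (predT : pred I))).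
    move=> h; rewrite -count_predUI.
    have -> : count (predI (fun p => h p < c) (fun p => h p == c)) (enum (predT : pred I)) = 0%N.
      rewrite (eq_count (a2 := pred0)) ?count_pred0 // => p /=.
      by apply/negbTE; apply/negP => /andP[pc /eqP pe]; rewrite pe ltxx in pc.
    rewrite addn0; apply: eq_count => p /=.
    by rewrite le_eqVlt orbC.
  have Clt : count (fun p => U y p < c) (enum (predT : pred I)) = count (fun p => U x p < c) (enum (predT : pred I)).
    by have := perm_size Hp; rewrite !size_filter !uv_map !count_map.
  have Ceq : leq (count (fun p => U y p == c) (enum (predT : pred I))).+1 (count (fun p => U x p == c) (enum (predT : pred I))).
    by move: Hc; rewrite !uv_map !count_map.
  move: C1; rewrite !Cs Clt; move: Ceq; lia.
case: Hex => p0 p0A Hp0.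
have K4 : \sum_(p in A) mn (U y p) < \sum_(p in A) U y p.
  rewrite (bigD1 p0) // [X in _ < X](bigD1 p0) //=; apply: ltr_leD.
    by rewrite /mn (lt_gtF Hp0).
  apply: ler_sum => p _; rewrite /mn; case: ifP => // /negbT; rewrite -leNgt.
  by [].
move: HL; rewrite sumrB; lra.
Qed.

End Market.

Theorem corollary1 (R : realType) (n m T : nat)
  (v : 'I_n -> 'I_m -> R) (d : 'I_n -> 'I_T -> R)
  (sp : 'I_m -> 'I_T -> R) (s : 'I_m -> R)
  (hv : forall i j, v i j = 0 \/ v i j = 1)
  (hd : forall i t, 0 <= d i t)
  (hsp : forall j t, 0 <= sp j t)
  (hs : forall j, 0 <= s j)
  (hpos : exists x : alloc R n m T, feasible sp s x /\ all_pos v d x) :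
  forall x : alloc R n m T,
    leximin_optimal v d sp s x <-> max_nash_welfare v d sp s x.
Proof.
move=> x; split.
- move=> Hl; have xf := Hl.1.
  apply: LS_MNW => //.
    exact: (lex_allpos hpos Hl).
  apply: (NE_LS hv) => //; [exact: lex_nV1 Hl | exact: lex_nV2 Hl].
- move=> Hm; have [xf _ _] := Hm.
  apply: LS_lex => //; apply: (NE_LS hv) => //; [exact: MNW_nV1 Hm | exact: MNW_nV2 Hm].
Qed.
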